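(* For the direct referral reward scheme on the chain defined in the context, for every $i\le h-1$, $$r(i,1)\le nhP_h+1\quad\text{and}\quad r(i,0)\le nh^2P_h+h.$$
   Context: Chain with agents at positions $1,2,\dots$, each independently holding an answer with probability $p=1/n$; $h\ge1$. $r(i,s)$ is the reward to the agent at position $i$ when the first answer is at position $i+s\le h$. Let $P_i=\sum_{j=1}^i p(1-p)^{j-1}$ and $R_i=\sum_{s=1}^{h-i} r(i,s)p(1-p)^{s-1}$ (so $R_h=0$). The scheme is defined backwards by: $r(i,1)=nR_{i+1}+P_{h-i-1}$ for $i\le h-1$; $r(i,0)=\sum_{t=i}^{h-1}r(t,1)+1$ for $1\le i\le h$; $r(i,s)=1$ if $i+s\le h$ and $s>1$; $r(i,s)=0$ otherwise. *)

(* Defs.v *)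
From mathcomp Require Import all_boot all_order all_algebra.
Set Implicit Arguments. Unset Strict Implicit. Unset Printing Implicit Defensive.
Import Order.TTheory GRing.Theory Num.Theory.
Local Open Scope ring_scope.

Section Chain.
Variable R : realFieldType.
Variables (n h : nat).

Definition pr : R := 1 / n%:R.

Definition Pc (j : nat) : R := \sum_(1 <= k < j.+1) pr * (1 - pr) ^+ (k.-1).

(* r1d d = r(h-d, 1), computed backwards: for d = d'.+1 (i = h - d),
   r(i,1) = n R_{i+1} + P_{h-i-1} with
   R_{i+1} = sum_{s=1}^{h-i-1} r(i+1,s) p (1-p)^(s-1),
   where r(i+1,1) = r1d d' and r(i+1,s) = 1 for s > 1 (and i+1+s <= h). *)
Fixpoint r1d (d : nat) : R :=
  match d with
  | 0 => 0
  | d'.+1 =>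
      n%:R * (\sum_(1 <= s < d'.+1)
                 (if s == 1%N then r1d d' else 1) * (pr * (1 - pr) ^+ (s.-1)))
      + Pc d'
  end.

Definition r (i s : nat) : R :=
  if (i + s <= h)%N then
    match s with
    | 0 => (\sum_(i <= t < h) r1d (h - t)) + 1
    | 1 => r1d (h - i)
    | _ => 1
    end
  else 0.

Definition Rc (i : nat) : R :=
  \sum_(1 <= s < (h - i).+1) r i s * (pr * (1 - pr) ^+ (s.-1)).

End Chain.

(* Main.v *)
Require Import Defs.
From mathcomp Require Import all_boot all_order all_algebra.
From mathcomp Require Import ring lra zify.
Import Order.TTheory GRing.Theory Num.Theory.
Local Open Scope ring_scope.

Section Aux.
Variable R : realFieldType.
Variables (n h : nat).
Hypothesis hn : (0 < n)%N.

Lemma npr : n%:R * pr R n = 1.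
Proof. rewrite /pr mul1r divff // pnatr_eq0; lia. Qed.

Lemma pr_ge0 : 0 <= pr R n.
Proof. by rewrite /pr mul1r invr_ge0 ler0n. Qed.

Lemma q_ge0 : 0 <= 1 - pr R n.
Proof.
rewrite subr_ge0 /pr mul1r invf_le1 ?ltr0n // ler1n //.
Qed.

Lemma Pc_closed d : Pc R n d = 1 - (1 - pr R n) ^+ d.
Proof.
elim: d => [|d IH]; first by rewrite /Pc big_geq // expr0 subrr.
rewrite /Pc big_nat_recr //= -/(Pc R n d) IH exprS. ring.
Qed.

Lemma Pc_le1 d : Pc R n d <= 1.
Proof. rewrite Pc_closed lerBlDr lerDl; apply: exprn_ge0; exact: q_ge0. Qed.

Lemma term_ge0 k : 0 <= pr R n * (1 - pr R n) ^+ k.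
Proof. apply: mulr_ge0; [exact: pr_ge0 | apply: exprn_ge0; exact: q_ge0]. Qed.

Lemma Pc_mono d e : (d <= e)%N -> Pc R n d <= Pc R n e.
Proof.
move=> de; rewrite /Pc [X in _ <= X](big_cat_nat (n := d.+1)) /=; [|by []|by rewrite ltnS].
rewrite lerDl /=; apply: sumr_ge0 => k _; exact: term_ge0.
Qed.

Lemma Pc_ge0 d : 0 <= Pc R n d.
Proof. by apply: sumr_ge0 => k _; exact: term_ge0. Qed.

Lemma r1d_step d : r1d R n d.+1 <= r1d R n d + n%:R * Pc R n d.
Proof.
case: d => [|d].
  by rewrite /= big_geq // mulr0 add0r /Pc big_geq // mulr0 !addr0.
have -> : r1d R n d.+2 = n%:R * (\sum_(1 <= s < d.+2)
     (if s == 1%N then r1d R n d.+1 else 1) * (pr R n * (1 - pr R n) ^+ (s.-1))) + Pc R n d.+1 by [].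
set a := r1d R n d.+1.
rewrite big_ltn // eqxx.
set X := \sum_(2 <= s < d.+2) _.
have -> : X = \sum_(2 <= s < d.+2) pr R n * (1 - pr R n) ^+ s.-1.
  apply: eq_big_nat => s /andP [s2 _]; have -> : (s == 1%N) = false by case: s s2 => [|[]].
  by rewrite mul1r.
set Y := \sum_(2 <= s < d.+2) _.
have hP := Pc_le1 d.+1.
have e := npr.
have EP : Pc R n d.+1 = pr R n + Y by rewrite /Pc big_ltn //= expr0 mulr1.
rewrite EP in hP *.
rewrite expr0 mulr1 !mulrDr.
have -> : n%:R * (a * pr R n) = a by rewrite mulrCA e mulr1.
rewrite e.
lra.
Qed.

Lemma r1d_bound d : (d <= h)%N -> r1d R n d <= d%:R * (n%:R * Pc R n h).
Proof.
elim: d => [|d IH] hd; first by rewrite /= mul0r.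
apply: le_trans (r1d_step d) _.
rewrite -addn1 natrD mulrDl mul1r lerD ?IH //; first lia.
rewrite ler_pM2l ?ltr0n //; apply: Pc_mono; lia.
Qed.

End Aux.

Theorem proposition4p2 (R : realFieldType) (n h : nat) (hn : (0 < n)%N) (hh : (1 <= h)%N)
  (i : nat) (hi1 : (1 <= i)%N) (hih : (i <= h - 1)%N) :
  r R n h i 1 <= n%:R * h%:R * Pc R n h + 1 /\
  r R n h i 0 <= n%:R * h%:R ^+ 2 * Pc R n h + h%:R.
Proof.
have A0 : 0 <= n%:R * Pc R n h :> R by apply: mulr_ge0; [exact: ler0n | exact: Pc_ge0].
have B t : r1d R n (h - t) <= h%:R * (n%:R * Pc R n h).
  apply: le_trans (@r1d_bound R n h hn _ (leq_subr t h)) _.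
  by rewrite ler_wpM2r // ler_nat leq_subr.
split.
  rewrite /r ifT; last lia.
  apply: le_trans (B i) _.
  have -> : n%:R * h%:R * Pc R n h = h%:R * (n%:R * Pc R n h) :> R by ring.
  lra.
rewrite /r ifT; last lia.
have S : \sum_(i <= t < h) r1d R n (h - t) <= \sum_(i <= t < h) h%:R * (n%:R * Pc R n h).
  by apply: ler_sum_nat => t /andP [_ th]; exact: B.
rewrite sumr_const_nat in S.
have hh1 : (1 <= h%:R :> R) by rewrite ler1n.
have hih' : ((h - i)%:R <= h%:R :> R) by rewrite ler_nat leq_subr.
have : (h - i)%:R * (h%:R * (n%:R * Pc R n h)) <= h%:R * (h%:R * (n%:R * Pc R n h)) :> R.
  by rewrite ler_wpM2r // mulr_ge0 // ler0n.
rewrite mulrnAl in S. 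
move: S; rewrite -mulr_natl => S T.
have -> : n%:R * h%:R ^+ 2 * Pc R n h = h%:R * (h%:R * (n%:R * Pc R n h)) :> R by rewrite expr2; ring.
lra.
Qed.
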